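(* Let $(R,\mathfrak m,k)$ be a Noetherian local ring and $N$ a finitely generated $R$-module. The following are equivalent: (1) there is a finitely generated $R$-module $X$ such that $N$ is isomorphic to a Burch submodule of $X$; (2) there is a homomorphism $f:\mathfrak m\to N$ with $f\otimes_R k\neq0$; (3) $\tau_{\mathfrak m}(N)\not\subseteq\mathfrak m N$; (4) the inclusion $\operatorname{Hom}_R(\mathfrak m,\mathfrak m N)\hookrightarrow\operatorname{Hom}_R(\mathfrak m,N)$ induced by $\mathfrak m N\subseteq N$ is not surjective. If moreover $\operatorname{depth} N>0$, these are also equivalent to each of: (5) there is an $N$-regular element $a\in\mathfrak m$ such that $k$ is a direct summand of $N/aN$; (6) there is an $N$-regular element $a\in\mathfrak m$ such that $aN$ is a Burch submodule of $N$.
   Context: For a submodule $N$ of an $R$-module $X$ and an ideal $I$, $(N:_X I)=\{x\in X: Ix\subseteq N\}$. A submodule $N\subseteq X$ is a Burch submodule of $X$ if $\mathfrak m(N:_X\mathfrak m)\neq\mathfrak m N$. For modules $M,X$, the trace $\tau_M(X)=\sum_{f\in\operatorname{Hom}_R(M,X)}\operatorname{Im}(f)\subseteq X$. *)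

(* Defs.v *)
From HB Require Import structures.
From mathcomp Require Import all_boot all_order all_algebra.
Set Implicit Arguments. Unset Strict Implicit. Unset Printing Implicit Defensive.
Import GRing.Theory.
Local Open Scope ring_scope.

Section CommAlg.
Variable R : comUnitRingType.

Definition is_ideal (I : R -> Prop) : Prop :=
  [/\ I 0, (forall x y, I x -> I y -> I (x + y)) & (forall r x, I x -> I (r * x))].

Definition fg_ideal (I : R -> Prop) : Prop :=
  exists n (v : 'I_n -> R), forall x, I x <-> exists c : 'I_n -> R, x = \sum_i c i * v i.

Definition noetherian_ring : Prop := forall I, is_ideal I -> fg_ideal I.

Definition local_max (m : R -> Prop) : Prop :=
  [/\ is_ideal m, ~ m 1 & forall x, ~ m x -> x \is a GRing.unit].

Definition fin_gen (M : lmodType R) : Prop :=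
  exists n (v : 'I_n -> M), forall x, exists c : 'I_n -> R, x = \sum_i c i *: v i.

Definition ideal_mul (I : R -> Prop) (M : lmodType R) (S : M -> Prop) : M -> Prop :=
  fun x => exists n (r : 'I_n -> R) (s : 'I_n -> M),
    (forall i, I (r i) /\ S (s i)) /\ x = \sum_i r i *: s i.

Definition colon (X : lmodType R) (S : X -> Prop) (I : R -> Prop) : X -> Prop :=
  fun x => forall r, I r -> S (r *: x).

Definition burch (m : R -> Prop) (X : lmodType R) (S : X -> Prop) : Prop :=
  ~ (forall x, ideal_mul m (colon S m) x <-> ideal_mul m S x).

Definition trace (M X : lmodType R) : X -> Prop :=
  fun x => exists n (f : 'I_n -> {linear M -> X}) (y : 'I_n -> M),
    x = \sum_i f i (y i).

Definition is_quotient (M : lmodType R) (S : M -> Prop) (Q : lmodType R)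
  (pi : {linear M -> Q}) : Prop :=
  (forall q, exists x, pi x = q) /\ (forall x, pi x = 0 <-> S x).

Definition is_submod (M : lmodType R) (S : M -> Prop) (P : lmodType R)
  (j : {linear P -> M}) : Prop :=
  injective j /\ (forall x, S x <-> exists y, j y = x).

Definition regular_elt (N : lmodType R) (a : R) : Prop :=
  (forall x : N, a *: x = 0 -> x = 0) /\ ~ (forall x : N, exists y, x = a *: y).

Definition scal_sub (N : lmodType R) (a : R) : N -> Prop := fun x => exists y, x = a *: y.

(* depth N > 0, i.e. Ext^0_R(k, N) = Hom_R(k, N) = 0, with K a model of k *)
Definition depth_pos (K N : lmodType R) : Prop :=
  forall (g : {linear K -> N}) (z : K), g z = 0.

End CommAlg.

(* Main.v *)
Require Import Defs.
From HB Require Import structures.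
From mathcomp Require Import all_boot all_order all_algebra.
From Stdlib Require Import Classical ClassicalEpsilon FunctionalExtensionality PropExtensionality.
Set Implicit Arguments. Unset Strict Implicit. Unset Printing Implicit Defensive.
Import GRing.Theory.
Local Open Scope ring_scope.

Section MkLin.
Variables (R : pzRingType) (U V : lmodType R) (f : U -> V).
Definition mkLin (_ : forall a x y, f (a *: x + y) = a *: f x + f y) := f.
Variable Hf : forall a x y, f (a *: x + y) = a *: f x + f y.
Lemma mkLin_lin : linear (mkLin Hf). Proof. move=> a x y; exact: Hf. Qed.
HB.instance Definition _ := GRing.isLinear.Build R U V *:%R (mkLin Hf) mkLin_lin.
End MkLin.

Lemma mk_linear (R : pzRingType) (U V : lmodType R) (f : U -> V) :
  (forall a x y, f (a *: x + y) = a *: f x + f y) ->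
  exists g : {linear U -> V}, forall x, g x = f x.
Proof. move=> Hf; by exists (mkLin Hf). Qed.

Section Quot.
Variables (R : pzRingType) (V : lmodType R) (L : V -> Prop).
Hypotheses (L0 : L 0) (LD : forall x y, L x -> L y -> L (x + y))
  (LZ : forall a x, L x -> L (a *: x)).
Definition qc (v : V) : V := epsilon (inhabits (0:V)) (fun w => L (v - w)).
Lemma LN x : L x -> L (- x). Proof. by move=> h; rewrite -scaleN1r; apply: LZ. Qed.
Lemma qc_spec v : L (v - qc v).
Proof. apply: (epsilon_spec (inhabits (0:V)) (fun w => L (v - w))). by exists v; rewrite subrr. Qed.
Lemma qc_eq v w : L (v - w) -> qc v = qc w.
Proof.
move=> h; rewrite /qc; f_equal; apply: functional_extensionality => u.
apply: propositional_extensionality; split => H.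
- have := LD (LN h) H; by rewrite opprB addrA subrK.
- have := LD h H; by rewrite addrA subrK.
Qed.
Lemma qc_eqE v w : qc v = qc w -> L (v - w).
Proof.
move=> e; have h1 := qc_spec v; have h2 := LN (qc_spec w).
have := LD h1 h2. by rewrite e opprB addrA subrK.
Qed.
Lemma qcK v : qc (qc v) = qc v.
Proof. apply: qc_eq. rewrite -opprB; apply: LN; exact: qc_spec. Qed.

Definition Q := {v : V | qc v == v}.
HB.instance Definition _ := Choice.on Q.
Definition qpi (v : V) : Q := exist _ (qc v) (introT eqP (qcK v)).
Definition qadd (x y : Q) : Q := qpi (val x + val y).
Definition qopp (x : Q) : Q := qpi (- val x).
Definition qzero : Q := qpi 0.
Definition qscale (a : R) (x : Q) : Q := qpi (a *: val x).
Lemma qvalK (x : Q) : qpi (val x) = x.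
Proof. apply: val_inj => /=; by case: x => v /= /eqP. Qed.
Lemma qpi_eq v w : L (v - w) -> qpi v = qpi w.
Proof. move=> h; apply: val_inj => /=; exact: qc_eq. Qed.
Lemma qpi_eqE v w : qpi v = qpi w -> L (v - w).
Proof. move=> h; apply: qc_eqE. exact: (congr1 val h). Qed.
Lemma qpiL v : L (val (qpi v) - v).
Proof. rewrite -opprB; apply: LN; exact: qc_spec. Qed.
Lemma qpiD v w : qadd (qpi v) (qpi w) = qpi (v + w).
Proof. apply: qpi_eq. have := LD (qpiL v) (qpiL w). congr L. rewrite /=. 
  by rewrite opprD !addrA; congr (_ + _); rewrite -!addrA; congr (_ + _); rewrite addrC. Qed.
Lemma qpiN v : qopp (qpi v) = qpi (- v).
Proof. apply: qpi_eq. have := LN (qpiL v). by rewrite opprD opprK addrC. Qed.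
Lemma qpiZ a v : qscale a (qpi v) = qpi (a *: v).
Proof. apply: qpi_eq. have := LZ a (qpiL v). by rewrite scalerBr. Qed.
Lemma qind (P : Q -> Prop) : (forall v, P (qpi v)) -> forall x, P x.
Proof. move=> h x; rewrite -(qvalK x); exact: h. Qed.
Lemma qaddA : associative qadd.
Proof. elim/qind=> x; elim/qind=> y; elim/qind=> z. by rewrite !qpiD addrA. Qed.
Lemma qaddC : commutative qadd.
Proof. elim/qind=> x; elim/qind=> y. by rewrite !qpiD addrC. Qed.
Lemma qadd0 : left_id qzero qadd.
Proof. elim/qind=> x. by rewrite /qzero qpiD add0r. Qed.
Lemma qaddN : left_inverse qzero qopp qadd.
Proof. elim/qind=> x. by rewrite qpiN qpiD addNr. Qed.
HB.instance Definition _ := GRing.isZmodule.Build Q qaddA qaddC qadd0 qaddN.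
Lemma qscaleA a b x : qscale a (qscale b x) = qscale (a * b) x.
Proof. elim/qind: x => x. by rewrite !qpiZ scalerA. Qed.
Lemma qscale1 : left_id 1 qscale.
Proof. elim/qind=> x. by rewrite qpiZ scale1r. Qed.
Lemma qscaleDr : right_distributive qscale +%R.
Proof. move=> a; elim/qind=> x; elim/qind=> y. by rewrite /GRing.add /= qpiD !qpiZ qpiD scalerDr. Qed.
Lemma qscaleDl v : {morph qscale^~ v: a b / a + b}.
Proof. elim/qind: v => v a b. by rewrite /GRing.add /= !qpiZ qpiD scalerDl. Qed.
HB.instance Definition _ := GRing.Zmodule_isLmodule.Build R Q qscaleA qscale1 qscaleDr qscaleDl.
Lemma qpi_lin a x y : qpi (a *: x + y) = a *: qpi x + qpi y.
Proof. rewrite /GRing.scale /GRing.add /= qpiZ qpiD. done. Qed.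
Lemma qpi0 v : qpi v = 0 <-> L v.
Proof. split=> [h|h]. - have := qpi_eqE (h : qpi v = qpi 0). by rewrite subr0.
  - apply: (qpi_eq (w:=0)). by rewrite subr0. Qed.
End Quot.

Lemma quotient_exists (R : pzRingType) (V : lmodType R) (L : V -> Prop) :
  L 0 -> (forall x y, L x -> L y -> L (x + y)) -> (forall a x, L x -> L (a *: x)) ->
  exists (Q : lmodType R) (pi : {linear V -> Q}),
    (forall q, exists x, pi x = q) /\ (forall x, pi x = 0 <-> L x).
Proof.
move=> L0 LD LZ.
have [g Hg] := mk_linear (qpi_lin L0 LD LZ).
eexists; exists g; split.
- move=> q; exists (val q); by rewrite Hg qvalK.
- move=> x; rewrite Hg; exact: qpi0.
Qed.

Lemma factor_quot (R : pzRingType) (V Q W : lmodType R) (pi : {linear V -> Q})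
  (h : {linear V -> W}) : (forall q, exists x, pi x = q) ->
  (forall x, pi x = 0 -> h x = 0) -> exists hb : {linear Q -> W}, forall x, hb (pi x) = h x.
Proof.
move=> sur ker.
pose s q := epsilon (inhabits (0:V)) (fun x => pi x = q).
have sP q : pi (s q) = q.
  by apply: (epsilon_spec (inhabits (0:V)) (fun x => pi x = q)); apply: sur.
have key x y : pi x = pi y -> h x = h y.
  move=> e; apply/eqP; rewrite -subr_eq0; apply/eqP; rewrite -linearB; apply: ker.
  by rewrite linearB e subrr.
have lin : forall a q1 q2, h (s (a *: q1 + q2)) = a *: h (s q1) + h (s q2).
  move=> a q1 q2; rewrite -linearP; apply: key; by rewrite linearP !sP.
have [g Hg] := mk_linear lin.
exists g => x; rewrite Hg; apply: key; by rewrite sP.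
Qed.

Lemma factor_inj (R : pzRingType) (P M N : lmodType R) (j : {linear P -> N})
  (f : {linear M -> N}) : injective j ->
  (forall x, exists y, j y = f x) -> exists g : {linear M -> P}, forall x, j (g x) = f x.
Proof.
move=> inj ex.
pose s x := epsilon (inhabits (0:P)) (fun y => j y = f x).
have sP x : j (s x) = f x.
  by apply: (epsilon_spec (inhabits (0:P)) (fun y => j y = f x)); apply: ex.
have lin : forall a x y, s (a *: x + y) = a *: s x + s y.
  move=> a x y; apply: inj; by rewrite linearP !sP linearP.
have [g Hg] := mk_linear lin.
exists g => x; by rewrite Hg sP.
Qed.

Section Basics.
Variable R : comUnitRingType.

Definition submod (V : lmodType R) (S : V -> Prop) :=
  [/\ S 0, (forall x y, S x -> S y -> S (x + y)) & (forall a x, S x -> S (a *: x))].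

Lemma submodN (V : lmodType R) (S : V -> Prop) : submod S -> forall x, S x -> S (- x).
Proof. by case=> _ _ SZ x h; rewrite -scaleN1r; apply: SZ. Qed.
Lemma submodB (V : lmodType R) (S : V -> Prop) : submod S -> forall x y, S x -> S y -> S (x - y).
Proof. move=> hS x y hx hy; have hN := submodN hS; case: hS => _ SD _; apply: SD => //; exact: hN. Qed.

Lemma submod_big (V : lmodType R) (S : V -> Prop) (I : Type) (r : seq I) (Pr : pred I)
  (F : I -> V) : submod S -> (forall i, Pr i -> S (F i)) -> S (\sum_(i <- r | Pr i) F i).
Proof. case=> S0 SD _ h; by apply: big_ind. Qed.

Lemma ideal_submod (I : R -> Prop) : is_ideal I -> submod (V:=R^o) I.
Proof. by case=> I0 ID IM; split. Qed.

Lemma submod_ext (V : lmodType R) (S S' : V -> Prop) : (forall x, S x <-> S' x) ->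
  submod S -> submod S'.
Proof. move=> e [S0 SD SZ]; split; first by apply/e.
- move=> x y /e hx /e hy; apply/e; exact: SD.
- move=> a x /e hx; apply/e; exact: SZ. Qed.

Lemma im_sub (V : lmodType R) (I : R -> Prop) (S T : V -> Prop) : submod T ->
  (forall r s, I r -> S s -> T (r *: s)) -> forall x, ideal_mul I S x -> T x.
Proof.
move=> hT h x [n [r [s [hrs ->]]]]; apply: submod_big => // i _.
by case: (hrs i) => ?; apply: h.
Qed.

Lemma im1 (V : lmodType R) (I : R -> Prop) (S : V -> Prop) r s : I r -> S s ->
  ideal_mul I S (r *: s).
Proof. move=> hr hs; exists 1%N, (fun _ => r), (fun _ => s); split=> //.
  by rewrite big_ord1. Qed.

Lemma im_submod (V : lmodType R) (I : R -> Prop) (S : V -> Prop) : is_ideal I ->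
  submod (ideal_mul I S).
Proof.
case=> I0 ID IM; split.
- exists 0%N, (fun _ => 0), (fun _ => 0); split; first by case.
  by rewrite big_ord0.
- move=> x y [n1 [r1 [s1 [h1 ->]]]] [n2 [r2 [s2 [h2 ->]]]].
  exists (n1 + n2)%N, (fun i => match split i with inl a => r1 a | inr b => r2 b end),
    (fun i => match split i with inl a => s1 a | inr b => s2 b end); split.
    by move=> i; case: (split i) => a.
  rewrite big_split_ord /=; congr (_ + _); apply: eq_bigr => i _.
  + by have -> : split (lshift n2 i) = inl i by exact: (unsplitK (inl i)).
  + by have -> : split (rshift n1 i) = inr i by exact: (unsplitK (inr i)).
- move=> a x [n [r [s [h ->]]]].
  exists n, (fun i => a * r i), s; split.
    by move=> i; case: (h i) => ??; split=> //; apply: IM.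
  rewrite scaler_sumr; apply: eq_bigr => i _; by rewrite scalerA.
Qed.

Lemma im_image (U V : lmodType R) (I : R -> Prop) (S : U -> Prop) (S' : V -> Prop)
  (h : {linear U -> V}) : (forall s, S s -> S' (h s)) ->
  forall x, ideal_mul I S x -> ideal_mul I S' (h x).
Proof.
move=> hS x [n [r [s [hrs ->]]]]; exists n, r, (fun i => h (s i)); split.
  by move=> i; case: (hrs i) => ??; split=> //; apply: hS.
rewrite linear_sum; apply: eq_bigr => i _; by rewrite linearZ.
Qed.

Lemma im_ext (V : lmodType R) (I : R -> Prop) (S S' : V -> Prop) :
  (forall x, S x <-> S' x) -> forall x, ideal_mul I S x <-> ideal_mul I S' x.
Proof.
move=> e x; split=> [[n [r [s [h ->]]]]|[n [r [s [h ->]]]]]; exists n, r, s; split=> //;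
  move=> i; case: (h i) => ??; split=> //; by apply/e.
Qed.

Lemma im_mono (V : lmodType R) (I : R -> Prop) (S S' : V -> Prop) :
  (forall x, S x -> S' x) -> forall x, ideal_mul I S x -> ideal_mul I S' x.
Proof.
move=> e x [n [r [s [h ->]]]]; exists n, r, s; split=> //.
move=> i; case: (h i) => ??; split=> //; by apply/e.
Qed.

Lemma im_of_image (U V : lmodType R) (I : R -> Prop) (g : {linear U -> V}) :
  is_ideal I -> forall x, ideal_mul I (fun x => exists y, g y = x) x ->
  exists y, ideal_mul I (fun _ => True) y /\ g y = x.
Proof.
move=> hI; apply: im_sub.
- have [T0 TD TZ] := im_submod (fun _ : U => True) hI; split.
  + by exists 0; rewrite linear0.
  + move=> x y [x' [hx <-]] [y' [hy <-]]; exists (x' + y'); rewrite linearD; split=> //.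
    exact: TD.
  + move=> a x [x' [hx <-]]; exists (a *: x'); rewrite linearZ; split=> //; exact: TZ.
- move=> r s hr [y <-]; exists (r *: y); rewrite linearZ; split=> //; exact: im1.
Qed.

Definition comb (V : lmodType R) (l : seq (R * V)) : V := \sum_(p <- l) p.1 *: p.2.
Definition gen (V : lmodType R) (P : V -> Prop) (x : V) :=
  exists l : seq (R * V), (forall p, p \in l -> P p.2) /\ x = comb l.
Definition fgS (V : lmodType R) (S : V -> Prop) :=
  exists l : seq V, (forall v, v \in l -> S v) /\ forall x, S x -> gen (fun v => v \in l) x.

Lemma gen_submod (V : lmodType R) (P : V -> Prop) : submod (gen P).
Proof.
split.
- by exists [::]; split=> //; rewrite /comb big_nil.
- move=> x y [l1 [h1 ->]] [l2 [h2 ->]]; exists (l1 ++ l2); split.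
    move=> p; rewrite mem_cat => /orP [] hp; [exact: h1|exact: h2].
  by rewrite /comb big_cat.
- move=> a x [l [h ->]]; exists [seq (a * p.1, p.2) | p <- l]; split.
    move=> p /mapP [q hq ->] /=; exact: h.
  rewrite /comb big_map scaler_sumr; apply: eq_bigr => p _; by rewrite scalerA.
Qed.

Lemma gen_in (V : lmodType R) (P : V -> Prop) v : P v -> gen P v.
Proof. move=> h; exists [:: (1, v)]; split; first by move=> p; rewrite inE => /eqP ->.
  by rewrite /comb big_seq1 scale1r. Qed.

Lemma gen_sub (V : lmodType R) (P T : V -> Prop) : submod T -> (forall v, P v -> T v) ->
  forall x, gen P x -> T x.
Proof.
move=> hT h x [l [hl ->]]; rewrite /comb big_seq; apply: submod_big => // p hp.
case: hT => _ _ TZ; apply: TZ; apply: h; exact: hl.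
Qed.

Lemma gen_mono (V : lmodType R) (P P' : V -> Prop) : (forall v, P v -> P' v) ->
  forall x, gen P x -> gen P' x.
Proof. move=> h; apply: gen_sub; [exact: gen_submod| by move=> v /h; apply: gen_in]. Qed.

Lemma gen_ord (V : lmodType R) (P : V -> Prop) n (c : 'I_n -> R) (v : 'I_n -> V) :
  (forall i, P (v i)) -> gen P (\sum_i c i *: v i).
Proof.
move=> h; exists [seq (c i, v i) | i <- index_enum 'I_n]; split.
  by move=> p /mapP [i _ ->]; apply: h.
by rewrite /comb big_map.
Qed.

Lemma gen_cons (V : lmodType R) (Q : V -> Prop) (n : V) x :
  gen (fun v => v = n \/ Q v) x -> exists c x', gen Q x' /\ x = c *: n + x'.
Proof.
case=> l [hl ->]; elim: l hl => [|p l IH] hl.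
  exists 0, 0; split; first by case: (gen_submod Q).
  by rewrite /comb big_nil scale0r addr0.
have [c [x' [hx' e]]] : exists c x', gen Q x' /\ comb l = c *: n + x'.
  apply: IH => q hq; apply: hl; by rewrite inE hq orbT.
rewrite /comb big_cons -/(comb l) e.
case: (hl p (mem_head _ _)) => [hp|hp].
- exists (p.1 + c), x'; split=> //. by rewrite hp scalerDl addrA.
- exists c, (p.1 *: p.2 + x'); split.
  + case: (gen_submod Q) => _ GD GZ; apply: GD => //; apply: GZ; exact: gen_in.
  + by rewrite addrCA.
Qed.

Lemma gen_nil (V : lmodType R) x : gen (fun v : V => False) x -> x = 0.
Proof. case=> [[|p l]] [hl ->]; first by rewrite /comb big_nil.
  by case: (hl p (mem_head _ _)). Qed.
End Basics.

Section Noeth.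
Variable R : comUnitRingType.
Hypothesis HR : noetherian_ring R.

Lemma noeth_ideal (I : R^o -> Prop) : submod I -> fgS I.
Proof.
move=> hI; have hI' : is_ideal I by case: hI => ???; split.
have [n [v hv]] := HR hI'.
exists [seq v i | i <- index_enum 'I_n]; split.
- move=> u /mapP [i _ ->]; apply/hv; exists (fun j => (j == i)%:R).
  rewrite (bigD1 i) //= eqxx mul1r big1 ?addr0 // => j /negbTE ->; by rewrite mul0r.
- move=> x /hv [c ->]; apply: (gen_ord (P := fun u : R^o => u \in _)) => i.
  by apply: map_f; rewrite mem_index_enum.
Qed.

Lemma noeth_gen (N : lmodType R) (vs : seq N) (S : N -> Prop) : submod S ->
  (forall x, S x -> gen (fun u => u \in vs) x) -> fgS S.
Proof.
elim: vs S => [|v vs IH] S hS hsub.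
  exists [::]; split; first by [].
  move=> x /hsub hx.
  have -> : x = 0 by apply: gen_nil; apply: gen_mono hx.
  by case: (gen_submod (fun u : N => u \in [::])).
pose I (c : R^o) := exists x, gen (fun u => u \in vs) x /\ S (x + c *: v).
have [S0 SD SZ] := hS.
have [G0 GD GZ] := gen_submod (fun u : N => u \in vs).
have hI : submod I.
  split.
  - by exists 0; split=> //; rewrite scale0r addr0.
  - move=> c1 c2 [x1 [g1 s1]] [x2 [g2 s2]]; exists (x1 + x2); split; first exact: GD.
    have := SD _ _ s1 s2; congr S; rewrite scalerDl.
    by rewrite -!addrA; congr (_ + _); rewrite addrCA.
  - move=> a c [x [g s]]; exists (a *: x); split; first exact: GZ.
    have := SZ a _ s; congr S; by rewrite scalerDr scalerA.
have [cl [clI clgen]] := noeth_ideal hI.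
pose wit c := epsilon (inhabits (0:N)) (fun x => gen (fun u => u \in vs) x /\ S (x + c *: v)).
have witP c : I c -> gen (fun u => u \in vs) (wit c) /\ S (wit c + c *: v).
  by move=> hc; apply: (epsilon_spec (inhabits (0:N)) (fun x => gen (fun u => u \in vs) x /\ S (x + c *: v))).
pose S' x := S x /\ gen (fun u => u \in vs) x.
have hS' : submod S'.
  split; first by split.
  - by move=> x y [??] [??]; split; [apply: SD|apply: GD].
  - by move=> a x [??]; split; [apply: SZ|apply: GZ].
have [ul [ulS ulgen]] := IH S' hS' (fun x h => h.2).
pose l := [seq wit c + c *: v | c <- cl] ++ ul.
have lS : forall u, u \in l -> S u.
  move=> u; rewrite mem_cat => /orP [/mapP [c hc ->]|/ulS []] //.
  by case: (witP c (clI c hc)).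
exists l; split=> // x hx.
have [d [x' [gx' ex]]] : exists d x', gen (fun u => u \in vs) x' /\ x = d *: v + x'.
  apply: gen_cons; apply: gen_mono (hsub x hx) => u; rewrite inE => /orP [/eqP ->|h].
    by left. by right.
have Id : I d by exists x'; split=> //; rewrite addrC -ex.
have [lst [lstcl ed]] := clgen d Id.
pose y := \sum_(p <- lst) p.1 *: (wit p.2 + p.2 *: v).
have gy : gen (fun u => u \in l) y.
  exists [seq (p.1, wit p.2 + p.2 *: v) | p <- lst]; split; last by rewrite /comb big_map.
  move=> q /mapP [p hp ->] /=; rewrite mem_cat; apply/orP; left; apply: map_f; exact: lstcl.
have Sy : S y := gen_sub hS lS gy.
have ey : y = \sum_(p <- lst) p.1 *: wit p.2 + d *: v.
  rewrite /y ed /comb scaler_suml -big_split /=; apply: eq_bigr => p _.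
  by rewrite scalerDr scalerA.
have S'xy : S' (x - y).
  split; first exact: (submodB hS).
  rewrite ey ex opprD addrA.
  have -> : d *: v + x' - \sum_(p <- lst) p.1 *: wit p.2 - d *: v = x' - \sum_(p <- lst) p.1 *: wit p.2.
    by rewrite addrAC [d *: v + x']addrC addrK.
  idtac.
  apply: (submodB (gen_submod _)) => //. rewrite big_seq.
  apply: submod_big; first exact: gen_submod.
  move=> p hp; apply: GZ; case: (witP p.2 (clI _ (lstcl p hp))) => //.
have := ulgen _ S'xy => gxy.
have -> : x = y + (x - y) by rewrite addrC subrK.
case: (gen_submod (fun u => u \in l)) => _ GlD _; apply: GlD => //.
by apply: gen_mono gxy => u hu; rewrite mem_cat hu orbT.
Qed.

Lemma noeth_mod (N : lmodType R) : fin_gen N -> forall S : N -> Prop, submod S -> fgS S.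
Proof.
move=> [n [v hv]] S hS; apply: (noeth_gen (vs := [seq v i | i <- index_enum 'I_n])) => // x _.
have [c ->] := hv x; apply: gen_ord => i; apply: map_f; by rewrite mem_index_enum.
Qed.

End Noeth.

Section MaxEl.
Variable R : comUnitRingType.
Lemma maxel (V : lmodType R) : (forall S : V -> Prop, submod S -> fgS S) ->
  forall F : (V -> Prop) -> Prop, (forall S, F S -> submod S) -> forall S0, F S0 ->
  exists S, F S /\ forall S', F S' -> (forall x, S x -> S' x) -> forall x, S' x -> S x.
Proof.
move=> noeth F hF S0 FS0; apply: NNPP => hn.
pose P S S' := F S' /\ (forall x, S x -> S' x) /\ ~ (forall x, S' x -> S x).
have step : forall S, F S -> exists S', P S S'.
  move=> S FS; apply: NNPP => hn2; apply: hn; exists S; split=> // S' FS' sub x hx.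
  apply: NNPP => hx'; apply: hn2; exists S'; split=> //; split=> // H; apply: hx'; exact: H.
pose nxt S := epsilon (inhabits S0) (P S).
have nxtP S : F S -> P S (nxt S).
  by move=> FS; apply: (epsilon_spec (inhabits S0) (P S)); apply: step.
pose s k := iter k nxt S0.
have Fs k : F (s k) by elim: k => //= k IH; case: (nxtP _ IH).
have mono i j : (i <= j)%N -> forall x, s i x -> s j x.
  elim: j => [|j IH]; first by rewrite leqn0 => /eqP ->.
  rewrite leq_eqVlt ltnS => /orP [/eqP -> //|/IH h] x /h.
  by case: (nxtP _ (Fs j)) => _ [+ _]; apply.
pose U x := exists k, s k x.
have hU : submod U.
  split.
  - by exists 0%N; case: (hF _ (Fs 0%N)).
  - move=> x y [k1 h1] [k2 h2]; exists (maxn k1 k2).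
    case: (hF _ (Fs (maxn k1 k2))) => _ SD _; apply: SD.
    + exact: mono (leq_maxl _ _) _ h1.
    + exact: mono (leq_maxr _ _) _ h2.
  - move=> a x [k h]; exists k; case: (hF _ (Fs k)) => _ _ SZ; exact: SZ.
have [l [lU lgen]] := noeth U hU.
have [K hK] : exists K, forall v, v \in l -> s K v.
  elim: l lU {lgen} => [|v l IH] lU; first by exists 0%N.
  have [K' hK'] := IH (fun u hu => lU u (@mem_behead _ (v :: l) u hu)).
  have [k hk] := lU v (mem_head _ _).
  exists (maxn k K') => u; rewrite inE => /orP [/eqP ->|hu].
    exact: mono (leq_maxl _ _) _ hk.
  exact: mono (leq_maxr _ _) _ (hK' u hu).
case: (nxtP _ (Fs K)) => _ [_]; apply => x hx.
have Ux : U x by exists K.+1.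
exact: gen_sub (hF _ (Fs K)) hK _ (lgen x Ux).
Qed.
End MaxEl.

Section Filt.
Variable R : comUnitRingType.

Definition prime_id (P : R -> Prop) :=
  [/\ is_ideal P, ~ P 1 & forall a b, P (a * b) -> P a \/ P b].

Definition sp (N : lmodType R) (fl : seq (N * (R -> Prop))) :=
  gen (fun v => exists P, List.In (v, P) fl).

Fixpoint good (N : lmodType R) (fl : seq (N * (R -> Prop))) : Prop :=
  match fl with
  | [::] => True
  | (n, P) :: fl' => [/\ good fl', prime_id P & forall r, P r <-> sp fl' (r *: n)]
  end.

Lemma idealMl (I : R -> Prop) a b : is_ideal I -> I a -> I (a * b).
Proof. case=> _ _ IM h; rewrite mulrC; exact: IM. Qed.
Lemma idealMr (I : R -> Prop) a b : is_ideal I -> I b -> I (a * b).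
Proof. case=> _ _ IM h; exact: IM. Qed.
Lemma idealN (I : R -> Prop) a : is_ideal I -> I a -> I (- a).
Proof. move=> hI h; rewrite -mulN1r; exact: idealMr. Qed.
Lemma idealD (I : R -> Prop) a b : is_ideal I -> I a -> I b -> I (a + b).
Proof. by case=> _ ID _; apply: ID. Qed.
Lemma idealB (I : R -> Prop) a b : is_ideal I -> I a -> I b -> I (a - b).
Proof. move=> hI ha hb; apply: idealD => //; exact: idealN. Qed.
Lemma ideal0 (I : R -> Prop) : is_ideal I -> I 0.
Proof. by case. Qed.

Lemma filtration (N : lmodType R) : noetherian_ring R -> fin_gen N ->
  exists fl : seq (N * (R -> Prop)), good fl /\ forall x, sp fl x.
Proof.
move=> HR HN.
pose F (S : N -> Prop) := exists fl, good fl /\ forall x, S x <-> sp fl x.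
have hF S : F S -> submod S.
  case=> fl [_ e]; apply: (submod_ext (S := sp fl)); first by move=> x; split=> /e.
  exact: gen_submod.
have [S [[fl [gfl eS]] maxS]] := maxel (noeth_mod HR HN) hF (S0 := sp [::])
  (ex_intro _ [::] (conj I (fun x => iff_refl _))).
exists fl; split=> // x; apply: NNPP => hx.
pose G (I : R^o -> Prop) := exists n, ~ sp fl n /\ forall r, I r <-> sp fl (r *: n).
have hG I : G I -> submod I.
  case=> n [_ e]; apply: (submod_ext (S := fun r : R^o => sp fl (r *: n))).
    by move=> r; split=> /e.
  have [G0 GD GZ] := gen_submod (fun v => exists P, List.In (v, P) fl).
  split.
  - by rewrite scale0r.
  - by move=> a b ha hb; rewrite scalerDl; apply: (GD).
  - by move=> a b hb; change (sp fl ((a * b) *: n)); rewrite -scalerA; apply: (GZ).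
have [I [[n0 [hn0 eI]] maxI]] := maxel (noeth_ideal HR) hG
  (S0 := fun r : R^o => sp fl (r *: x)) (ex_intro _ x (conj hx (fun r => iff_refl _))).
have hI : is_ideal I by case: (hG I (ex_intro _ n0 (conj hn0 eI))) => ???; split.
have [G0 GD GZ] := gen_submod (fun v => exists P, List.In (v, P) fl).
have pI : prime_id I.
  split=> //.
  - by move/eI; rewrite scale1r.
  - move=> a b hab; case: (classic (I a)) => ha; first by left.
    right.
    pose J (r : R^o) := sp fl (r *: (a *: n0)).
    have GJ : G J.
      exists (a *: n0); split=> // h; apply: ha; apply/eI; exact: h.
    have IJ : forall r, I r -> J r.
      move=> r /eI h; rewrite /J scalerA mulrC -scalerA; exact: GZ.
    have := maxI J GJ IJ b; apply; rewrite /J scalerA; apply/eI; by rewrite mulrC.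
pose fl' := (n0, I) :: fl.
have gfl' : good fl' by split.
have Ffl' : F (sp fl') by exists fl'; split.
have sub : forall y, S y -> sp fl' y.
  move=> y /eS; apply: gen_mono => v [P hP]; exists P; by right.
apply: hn0; apply/eS; apply: (maxS _ Ffl' sub); apply: gen_in; exists I; by left.
Qed.

Lemma zcover (N : lmodType R) (fl : seq (N * (R -> Prop))) : good fl ->
  forall x : N, sp fl x -> x <> 0 -> forall z, z *: x = 0 ->
  exists n P, List.In (n, P) fl /\ P z /\ exists y : N, y <> 0 /\ forall r, P r -> r *: y = 0.
Proof.
elim: fl => [|[n P] fl IH] /=.
  move=> _ x hx hx0; exfalso; apply: hx0; apply: gen_nil; apply: gen_mono hx.
  by move=> v [].
move=> [gfl pP eP] x hx hx0 z hz.
have [G0 GD GZ] := gen_submod (fun v => exists P, List.In (v, P) fl).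
have [c [x' [hx' ex]]] : exists c x', sp fl x' /\ x = c *: n + x'.
  apply: gen_cons; apply: gen_mono hx => v [Q [e|h]].
  - left; by case: e.
  - right; by exists Q.
case: (classic (exists t, sp fl (t *: x) /\ t *: x <> 0)) => [[t [ht ht0]]|hB].
  have := IH gfl _ ht ht0 z; rewrite scalerA mulrC -scalerA hz scaler0 => /(_ erefl).
  move=> [n' [P' [hin rest]]]; exists n', P'; split=> //; by right.
have hB' : forall t, sp fl (t *: x) -> t *: x = 0.
  move=> t ht; apply: NNPP => h; apply: hB; by exists t.
have [[_ _ PM] P1 Pp] := pP.
have hc : ~ P c.
  move=> /eP hc; apply: hx0; rewrite -[x]scale1r; apply: hB'; rewrite scale1r ex.
  exact: GD.
have key : forall r, r *: x = 0 -> P r.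
  move=> r hr; have : P (r * c).
    apply/eP; rewrite -scalerA.
    have -> : r *: (c *: n) = - (r *: x') by apply/eqP; rewrite -subr_eq0 opprK -scalerDr -ex hr.
    rewrite -scaleN1r; apply: (GZ); exact: GZ.
  by case/Pp => // /hc.
exists n, P; split; first by left.
split; first exact: key.
exists x; split=> // r hr; apply: hB'.
rewrite ex scalerDr scalerA mulrC -scalerA; apply: (GD); last exact: GZ.
apply: (GZ); exact/eP.
Qed.

Lemma prod_avoid (P : R -> Prop) (Ps : seq (R -> Prop)) : prime_id P ->
  (forall Q, List.In Q Ps -> is_ideal Q /\ exists q, Q q /\ ~ P q) ->
  exists z, ~ P z /\ forall Q, List.In Q Ps -> Q z.
Proof.
move=> [hP P1 Pp]; elim: Ps => [|Q Qs IH] h; first by exists 1.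
have [z' [hz' hQs]] := IH (fun Q' hQ' => h Q' (or_intror hQ')).
have [hQ [q [hq hqP]]] := h Q (or_introl erefl).
exists (q * z'); split; first by case/Pp.
move=> Q' [<-|hQ']; first exact: idealMl.
apply: idealMr; last exact: hQs.
by case: (h Q' (or_intror hQ')).
Qed.

Lemma minel (Ps : seq (R -> Prop)) : Ps <> [::] ->
  exists P Ps', List.In P Ps /\ (forall Q, List.In Q Ps -> Q = P \/ List.In Q Ps') /\
  (forall Q, List.In Q Ps' -> List.In Q Ps) /\ (size Ps' < size Ps)%N /\
  forall Q, List.In Q Ps' -> (forall x, Q x -> P x) -> forall x, P x -> Q x.
Proof.
elim: Ps => [//|Q Qs IH] _.
case: Qs IH => [|Q1 Qs1] IH.
  exists Q, [::]; split; first by left.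
  split; first by move=> Q' [->|[]]; left.
  by split.
have [P0 [Ps0 [hin [hcov [hsub [hsz hmin]]]]]] := IH (fun e => ltac:(discriminate e)).
case: (classic (forall x, Q x -> P0 x)) => hQ.
- exists Q, (Q1 :: Qs1); split; first by left.
  split; first by move=> Q' [->|h]; [left|right].
  split; first by move=> Q' h; right.
  split; first by [].
  move=> R' hR' hR'Q x hx.
  case: (hcov R' hR') => [->|hR'0]; first exact: hQ.
  have := hmin R' hR'0 (fun y hy => hQ y (hR'Q y hy)) x (hQ x hx); done.
- exists P0, (Q :: Ps0); split; first by right.
  split; first by move=> Q' [->|h]; [right; left|case: (hcov Q' h) => [->|h']; [left|right; right]].
  split; first by move=> Q' [->|h]; [left|right; apply: hsub].
  split; first by rewrite /= ltnS.
  move=> R' [<-|hR'] hR'P; first by move=> x hx; exfalso; apply: hQ.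
  exact: hmin.
Qed.

Lemma avoid k (Ps : seq (R -> Prop)) : (size Ps <= k)%N ->
  (forall P, List.In P Ps -> prime_id P) ->
  forall I J, is_ideal I -> is_ideal J -> (exists x, I x /\ ~ J x) ->
  (forall P, List.In P Ps -> exists x, I x /\ ~ P x) ->
  exists x, I x /\ ~ J x /\ forall P, List.In P Ps -> ~ P x.
Proof.
elim: k Ps => [|k IH] Ps.
  rewrite leqn0 => /nilP -> _ I J _ _ [x [??]] _; by exists x.
move=> hsz hpr I J hI hJ hIJ hIP.
case: (classic (Ps = [::])) => [->|hne].
  case: hIJ => x [??]; by exists x.
have [P [Ps' [hin [hcov [hsub [hsz' hmin]]]]]] := minel hne.
have hsz'' : (size Ps' <= k)%N by rewrite -ltnS; exact: leq_trans hsz' hsz.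
have hpr' : forall Q, List.In Q Ps' -> prime_id Q by move=> Q /hsub; apply: hpr.
have hIP' : forall Q, List.In Q Ps' -> exists x, I x /\ ~ Q x by move=> Q /hsub; apply: hIP.
have [x [hxI [hxJ hxP]]] := IH Ps' hsz'' hpr' I J hI hJ hIJ hIP'.
have cov : forall y, ~ P y -> (forall Q, List.In Q Ps' -> ~ Q y) -> forall Q, List.In Q Ps -> ~ Q y.
  by move=> y hy hy' Q /hcov [->|]; [|apply: hy'].
case: (classic (P x)) => hPx; last by exists x; split=> //; split=> //; apply: cov.
have [hPi P1 Pp] := hpr P hin.
case: (classic (forall y, J y -> P y)) => hJP.
  have [x' [hx'I [hx'P hx'Q]]] := IH Ps' hsz'' hpr' I P hI hPi (hIP P hin) hIP'.
  exists x'; split=> //; split; first by move/hJP.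
  exact: cov.
have [j [hj hjP]] : exists j, J j /\ ~ P j.
  apply: NNPP => h; apply: hJP => y hy; apply: NNPP => hy'; apply: h; by exists y.
have [i [hi hiP]] := hIP P hin.
have hQs : forall Q, List.In Q Ps' -> is_ideal Q /\ exists q, Q q /\ ~ P q.
  move=> Q hQ; split; first by case: (hpr' Q hQ).
  apply: NNPP => hn; apply: (hxP Q hQ); apply: (hmin Q hQ) => //.
  move=> y hy; apply: NNPP => hPy; apply: hn; by exists y.
have [z0 [hz0P hz0Q]] := prod_avoid (hpr P hin) hQs.
pose z := i * (j * z0).
have hzP : ~ P z by case/Pp => // /Pp [].
exists (x + z); split; first by apply: idealD => //; apply: idealMl.
split.
  move=> hJ'; have : J (x + z - z) by apply: idealB => //; rewrite /z mulrCA; exact: (idealMl _ hJ hj).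
  by rewrite addrK.
apply: cov.
- move=> h; apply: hzP; have := idealB hPi h hPx; by rewrite addrAC subrr add0r.
- move=> Q hQ h; apply: (hxP Q hQ).
  have hQi : is_ideal Q by case: (hpr' Q hQ).
  have := idealB hQi h (idealMr i hQi (idealMr j hQi (hz0Q Q hQ)) : Q z); by rewrite addrK.
Qed.
End Filt.

Section Main.
Variables (R : comUnitRingType) (m : R -> Prop).
Hypotheses (HR : noetherian_ring R) (Hloc : local_max m).
Variables (N : lmodType R).
Hypothesis (HN : fin_gen N).
Variables (M : lmodType R) (iota : {linear M -> R^o}).
Hypothesis (Hiota : is_submod (M:=R^o) m iota).
Variables (K : lmodType R) (rho : {linear R^o -> K}).
Hypothesis (Hrho : is_quotient (M:=R^o) m rho).

Local Notation mN := (ideal_mul m (fun _ : N => True)).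
Definition Q0 := exists (f : {linear M -> N}) y, ~ mN (f y).

Lemma mI : is_ideal m. Proof. by case: Hloc. Qed.
Lemma mNsub : submod mN. Proof. exact: im_submod mI. Qed.
Lemma iota_m y : m (iota y). Proof. apply/Hiota.2; by exists y. Qed.
Lemma m_iota r : m r -> exists y, iota y = r. Proof. by move/Hiota.2. Qed.
Lemma iota_inj : injective iota. Proof. exact: Hiota.1. Qed.

Lemma mN_lin (V W : lmodType R) (f : {linear V -> W}) x :
  ideal_mul m (fun _ : V => True) x -> ideal_mul m (fun _ : W => True) (f x).
Proof. exact: im_image. Qed.

Lemma P2_Q0 (QM : lmodType R) (piM : {linear M -> QM})
  (HpiM : is_quotient (ideal_mul m (fun _ : M => True)) piM)
  (QN : lmodType R) (piN : {linear N -> QN})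
  (HpiN : is_quotient (ideal_mul m (fun _ : N => True)) piN) :
  (exists (f : {linear M -> N}) (fbar : {linear QM -> QN}),
              (forall x, fbar (piM x) = piN (f x)) /\ exists z, fbar z <> 0) <-> Q0.
Proof.
split.
- move=> [f [fbar [hf [z hz]]]]; have [x hx] := HpiM.1 z.
  exists f, x => h; apply: hz; rewrite -hx hf; exact/HpiN.2.
- move=> [f [y hy]].
  have [h Hh] : exists h : {linear M -> QN}, forall x, h x = piN (f x).
    by apply: mk_linear => a x z; rewrite !linearP.
  have [fbar hfb] : exists fbar : {linear QM -> QN}, forall x, fbar (piM x) = h x.
    apply: factor_quot HpiM.1 _ => x /HpiM.2 hx; rewrite Hh; apply/HpiN.2; exact: mN_lin.
  exists f, fbar; split; first by move=> x; rewrite hfb Hh.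
  exists (piM y); rewrite hfb Hh => /HpiN.2; exact: hy.
Qed.

Lemma P3_Q0 : ~ (forall x, @trace R M N x -> ideal_mul m (fun _ : N => True) x) <-> Q0.
Proof.
split.
- move=> h; apply: NNPP => nq; apply: h => x [n [fs [ys ->]]].
  apply: submod_big; first exact: mNsub.
  move=> i _; apply: NNPP => hi; apply: nq; by exists (fs i), (ys i).
- move=> [f [y hy]] h; apply: hy; apply: h.
  exists 1%N, (fun _ => f), (fun _ => y); by rewrite big_ord1.
Qed.

Lemma P4_Q0 (P : lmodType R) (j : {linear P -> N})
  (Hj : is_submod (ideal_mul m (fun _ : N => True)) j) :
  ~ (forall f : {linear M -> N}, exists g : {linear M -> P}, forall x, j (g x) = f x) <-> Q0.
Proof.
split.
- move=> h; apply: NNPP => nq; apply: h => f.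
  apply: factor_inj; first exact: Hj.1.
  move=> x; apply/Hj.2; apply: NNPP => hx; apply: nq; by exists f, x.
- move=> [f [y hy]] h; have [g hg] := h f; apply: hy; rewrite -hg; apply/Hj.2; by exists (g y).
Qed.

Lemma colon_sub (X : lmodType R) (S : X -> Prop) : submod S -> forall x, S x -> colon S m x.
Proof. by case=> _ _ SZ x hx r _; apply: SZ. Qed.

Lemma burch_wit (X : lmodType R) (S : X -> Prop) : submod S ->
  burch m S -> exists r s, m r /\ colon S m s /\ ~ ideal_mul m S (r *: s).
Proof.
move=> hS hb; apply: NNPP => hn; apply: hb => x; split.
- apply: im_sub; first exact: im_submod mI.
  move=> r s hr hs; apply: NNPP => h; apply: hn; by exists r, s.
- apply: im_mono; exact: colon_sub.
Qed.

Lemma burch_intro (X : lmodType R) (S : X -> Prop) t :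
  ideal_mul m (colon S m) t -> ~ ideal_mul m S t -> burch m S.
Proof. move=> h1 h2 h; apply: h2; exact/h. Qed.

Lemma burch_ext (X : lmodType R) (S S' : X -> Prop) : (forall x, S x <-> S' x) ->
  burch m S -> burch m S'.
Proof.
move=> e hb h; apply: hb => x.
have ec : forall y, colon S m y <-> colon S' m y.
  by move=> y; split=> hy r hr; apply/e; apply: hy.
rewrite (im_ext _ ec) (im_ext _ e); exact: h.
Qed.

Lemma img_submod (U V : lmodType R) (g : {linear U -> V}) : submod (fun x => exists y, g y = x).
Proof.
split.
- by exists 0; rewrite linear0.
- move=> x y [x' <-] [y' <-]; exists (x' + y'); by rewrite linearD.
- move=> a x [x' <-]; exists (a *: x'); by rewrite linearZ.
Qed.

Lemma P1_Q0_l : (exists (X : lmodType R), fin_gen X /\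
              exists g : {linear N -> X}, injective g /\
                burch m (fun x : X => exists y, g y = x)) -> Q0.
Proof.
move=> [X [_ [g [ginj hb]]]].
have [r [s [hr [hs hn]]]] := burch_wit (img_submod g) hb.
have [f0 Hf0] : exists f0 : {linear M -> X}, forall y, f0 y = iota y *: s.
  by apply: mk_linear => a x y; rewrite linearP scalerDl scalerA.
have [f hf] : exists f : {linear M -> N}, forall x, g (f x) = f0 x.
  apply: factor_inj ginj _ => x; rewrite Hf0; apply: hs; exact: iota_m.
have [y hy] := m_iota hr.
exists f, y => hm; apply: hn.
have := hf y; rewrite Hf0 hy => <-.
apply: im_image hm => ? _; by eexists.
Qed.

Lemma P1_Q0_r : Q0 -> (exists (X : lmodType R), fin_gen X /\
              exists g : {linear N -> X}, injective g /\
                burch m (fun x : X => exists y, g y = x)).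
Proof.
move=> [f [y0 hy0]].
pose L (v : (R^o * N)%type) := exists y, v = (iota y, - f y).
have L0 : L 0 by exists 0; rewrite !linear0 ?oppr0.
have LD : forall x y, L x -> L y -> L (x + y).
  move=> x y [a ->] [b ->]; exists (a + b); rewrite !linearD; reflexivity.
have LZ : forall c x, L x -> L (c *: x).
  move=> c x [a ->]; exists (c *: a); rewrite !linearZ; reflexivity.
have [X [pi [pis pik]]] := quotient_exists L0 LD LZ.
have [g hg] : exists g : {linear N -> X}, forall n, g n = pi (0, n).
  apply: mk_linear => a x y.
  rewrite -linearP; f_equal.
  change (((0:R^o), a *: x + y) = (a *: (0:R^o) + 0, a *: x + y)); by rewrite scaler0 addr0.
have pieq : forall u v, L (u - v) -> pi u = pi v.
  move=> u v h; apply/eqP; rewrite -subr_eq0 -linearB; apply/eqP; exact/pik.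
have ginj : injective g.
  move=> a b; rewrite !hg => e.
  have : L ((0 : R^o, a) - (0, b)) by apply/pik; rewrite linearB e subrr.
  case=> y ee; have e1 := congr1 fst ee; have e2 := congr1 snd ee; simpl in e1, e2.
  have yz : y = 0 by apply: iota_inj; rewrite linear0 -e1 subrr.
  by apply/eqP; rewrite -subr_eq0; apply/eqP; rewrite e2 yz linear0 oppr0.
pose x0 := pi (1, 0).
have key : forall y, iota y *: x0 = g (f y).
  move=> y; rewrite hg /x0 -linearZ; apply: pieq; exists y.
  change ((iota y * 1 - 0, iota y *: (0:N) - f y) = (iota y, - f y)).
  by rewrite mulr1 subr0 scaler0 add0r.
exists X; split.
- case: HN => n [v hv].
  exists n.+1, (fun i => if unlift ord0 i is Some k then g (v k) else x0) => z.
  have [[r nn] <-] := pis z.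
  have [c hc] := hv nn.
  exists (fun i => if unlift ord0 i is Some k then c k else r).
  rewrite big_ord_recl unlift_none.
  under eq_bigr do rewrite liftK.
  have -> : (r, nn) = r *: ((1 : R^o), (0 : N)) + (0, nn).
    change ((r, nn) = (r * 1 + 0, r *: (0:N) + nn)); by rewrite mulr1 scaler0 add0r addr0.
  rewrite linearD linearZ; congr (_ + _).
  by rewrite -hg hc linear_sum; apply: eq_bigr => i _; rewrite linearZ.
- exists g; split=> //.
  apply: (burch_intro (t := iota y0 *: x0)).
  + apply: im1; first exact: iota_m.
    move=> r hr; have [y <-] := m_iota hr; rewrite key; by eexists.
  + move=> h; apply: hy0.
    have [w [hw e]] := im_of_image mI h.
    rewrite key in e; by rewrite -(ginj _ _ e).
Qed.
Lemma mK a : m a -> forall k : K, a *: k = 0.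
Proof.
move=> ha k; have [s <-] := Hrho.1 k; rewrite -linearZ; apply/Hrho.2.
change (m (a * s)); exact: idealMl mI ha.
Qed.

Lemma rho1 : rho 1 <> 0.
Proof. move/Hrho.2; by case: Hloc. Qed.

Lemma rho_eq u v : m (u - v) -> rho u = rho v.
Proof. move=> h; apply/eqP; rewrite -subr_eq0 -linearB; apply/eqP; exact/Hrho.2. Qed.

Lemma depth_ann (Hd : depth_pos K N) (y : N) : y <> 0 -> ~ (forall r, m r -> r *: y = 0).
Proof.
move=> hy hm.
have [h hh] : exists h : {linear R^o -> N}, forall r, h r = r *: y.
  apply: mk_linear => a r s; change ((a * r + s) *: y = a *: (r *: y) + s *: y).
  by rewrite scalerDl scalerA.
have [hb hhb] : exists hb : {linear K -> N}, forall r, hb (rho r) = h r.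
  apply: factor_quot Hrho.1 _ => r /Hrho.2 hr; rewrite hh; exact: hm.
apply: hy; have := Hd hb (rho 1); by rewrite hhb hh scale1r.
Qed.

Fixpoint filtF (fl : seq (N * (R -> Prop))) : seq (R -> Prop) :=
  match fl with
  | [::] => [::]
  | p :: fl' => if excluded_middle_informative (exists x, m x /\ ~ p.2 x)
                then p.2 :: filtF fl' else filtF fl'
  end.

Lemma filtF_in fl P : List.In P (filtF fl) -> (exists n, List.In (n, P) fl) /\ exists x, m x /\ ~ P x.
Proof.
elim: fl => [//|[n Q] fl IH] /=.
case: excluded_middle_informative => h.
  move=> [<-|/IH [[n' h1] h2]]; first by split=> //; exists n; left.
  by split=> //; exists n'; right.
by move=> /IH [[n' h1] h2]; split=> //; exists n'; right.
Qed.

Lemma filtF_in' fl n P : List.In (n, P) fl -> (exists x, m x /\ ~ P x) -> List.In P (filtF fl).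
Proof.
elim: fl => [//|[n' Q] fl IH] /= hin hx.
case: excluded_middle_informative => h.
  case: hin => [[_ e]|hin] /=; first by left.
  by right; apply: IH.
case: hin => [[_ e]|hin]; last exact: IH.
by exfalso; apply: h => /=; rewrite e.
Qed.

Lemma good_prime (fl : seq (N * (R -> Prop))) : good fl -> forall n P, List.In (n, P) fl -> prime_id P.
Proof.
elim: fl => [//|[n Q] fl IH] /= [gfl pQ _] n' P [[_ <-]|h] //.
exact: IH h.
Qed.

Lemma core (Hd : depth_pos K N) (f : {linear M -> N}) y0 : ~ mN (f y0) ->
  exists y, ~ mN (f y) /\ forall x : N, iota y *: x = 0 -> x = 0.
Proof.
move=> hy0.
pose T r := exists y, iota y = r /\ mN (f y).
have [N0 ND NZ] := mNsub.
have hT : is_ideal T.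
  split.
  - by exists 0; rewrite !linear0.
  - move=> a b [y1 [<- h1]] [y2 [<- h2]]; exists (y1 + y2); rewrite !linearD; split=> //.
    exact: ND.
  - move=> r a [y [<- h]]; exists (r *: y); rewrite !linearZ; split=> //.
    exact: NZ.
have [fl [gfl cov]] := filtration HR HN.
pose Ps := filtF fl.
have hPs : forall P, List.In P Ps -> prime_id P.
  move=> P /filtF_in [[n hn] _]; exact: good_prime gfl n P hn.
have hex : exists x, m x /\ ~ T x.
  exists (iota y0); split; first exact: iota_m.
  case=> y [e hy]; rewrite (iota_inj e) in hy; exact: hy0 hy.
have [a [ha [haT haP]]] := avoid (leqnn (size Ps)) hPs mI hT hex
  (fun P hP => proj2 (filtF_in hP)).
have [y hy] := m_iota ha.
exists y; split; first by move=> h; apply: haT; exists y.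
move=> x hx; apply: NNPP => hx0.
rewrite hy in hx.
have [n [P [hin [hPa [yy [hyy hann]]]]]] := zcover gfl (cov x) hx0 hx.
case: (classic (exists t, m t /\ ~ P t)) => hc.
  exact: haP P (filtF_in' hin hc) hPa.
apply: (depth_ann Hd hyy) => r hr; apply: hann; apply: NNPP => h; apply: hc; by exists r.
Qed.

Lemma scal_lin (a : R) : exists g : {linear N -> N}, forall x, g x = a *: x.
Proof. apply: mk_linear => b x y; by rewrite scalerDr !scalerA mulrC. Qed.

Lemma core2 (Hd : depth_pos K N) : Q0 -> exists a n, m a /\ regular_elt N a /\ ~ mN n /\
  forall r, m r -> exists z, r *: n = a *: z.
Proof.
move=> [f [y0 hy0]].
have [y [hy hreg]] := core Hd hy0.
exists (iota y), (f y); split; first exact: iota_m.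
split.
  split=> // hall; have [z hz] := hall (f y); apply: hy; rewrite hz; apply: im1 => //.
  exact: iota_m.
split=> // r hr; have [yr <-] := m_iota hr.
exists (f yr); rewrite -!linearZ; f_equal; apply: iota_inj.
rewrite !linearZ; change (iota yr * iota y = iota y * iota yr); exact: mulrC.
Qed.

Lemma Q0_P6 (Hd : depth_pos K N) : Q0 -> exists a, m a /\ regular_elt N a /\ burch m (scal_sub (N:=N) a).
Proof.
move=> /(core2 Hd) [a [n [ha [hreg [hn hr]]]]].
exists a; split=> //; split=> //.
apply: (burch_intro (t := a *: n)).
  apply: im1 => // r /hr [z ->]; by exists z.
have [g hg] := scal_lin a.
move=> h.
have E : forall x, scal_sub a x <-> exists y, g y = x.
  by move=> x; split=> [[y ->]|[y <-]]; exists y => //; rewrite hg.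
have [w [hw e]] := im_of_image mI (proj1 (im_ext m E (a *: n)) h).
apply: hn.
rewrite hg in e; have : a *: (w - n) = 0 by rewrite scalerBr e subrr.
move/hreg.1 => /eqP; rewrite subr_eq0 => /eqP <-; exact: hw.
Qed.

Lemma P6_P1 : (exists a, m a /\ regular_elt N a /\ burch m (scal_sub (N:=N) a)) ->
  (exists (X : lmodType R), fin_gen X /\
              exists g : {linear N -> X}, injective g /\
                burch m (fun x : X => exists y, g y = x)).
Proof.
move=> [a [ha [[hreg _] hb]]].
have [g hg] := scal_lin a.
exists N; split=> //; exists g; split.
  move=> x y; rewrite !hg => e; apply/eqP; rewrite -subr_eq0; apply/eqP; apply: hreg.
  by rewrite scalerBr e subrr.
apply: burch_ext hb => x; split=> [[y ->]|[y <-]]; exists y => //; by rewrite hg.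
Qed.

Lemma phi_exists (n : N) : ~ mN n -> exists phi : {linear N -> K}, phi n = rho 1.
Proof.
move=> hn.
pose F (S : N -> Prop) := submod S /\ (forall x, mN x -> S x) /\ ~ S n.
have [S [[hS [mS nS]] maxS]] := maxel (noeth_mod HR HN) (F := F) (fun S h => h.1)
  (S0 := mN) (conj mNsub (conj (fun x h => h) hn)).
have [S0 SD SZ] := hS.
have hSB := submodB hS.
have unitS : forall c, ~ m c -> c \is a GRing.unit.
  by case: Hloc => _ _ h.
have B : forall c, S (c *: n) -> m c.
  move=> c hc; apply: NNPP => hm; apply: nS.
  have := SZ (c^-1) _ hc; by rewrite scalerA mulVr ?scale1r //; apply: unitS.
have A : forall x, exists c, S (x - c *: n).
  move=> x; case: (classic (S x)) => hx; first by exists 0; rewrite scale0r subr0.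
  pose S2 v := exists s d, S s /\ v = s + d *: x.
  have hS2 : submod S2.
    split.
    - by exists 0, 0; rewrite scale0r addr0.
    - move=> u v [s1 [d1 [h1 ->]]] [s2 [d2 [h2 ->]]]; exists (s1 + s2), (d1 + d2).
      split; first exact: SD.
      by rewrite scalerDl -!addrA; congr (_ + _); rewrite addrCA.
    - move=> c u [s [d [h ->]]]; exists (c *: s), (c * d); split; first exact: SZ.
      by rewrite scalerDr scalerA.
  have S2n : S2 n.
    apply: NNPP => h.
    have F2 : F S2.
      split=> //; split=> // z hz; exists z, 0; split; [exact: mS|by rewrite scale0r addr0].
    apply: hx; apply: (maxS _ F2).
      by move=> z hz; exists z, 0; split=> //; rewrite scale0r addr0.
    by exists 0, 1; split=> //; rewrite scale1r add0r.
  case: S2n => s [d [hs en]].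
  case: (classic (m d)) => hd.
    exfalso; apply: nS; rewrite en; apply: SD => //; apply: mS; exact: im1.
  exists d^-1; rewrite en scalerDr scalerA mulVr ?scale1r; last exact: unitS.
  rewrite opprD addrA addrAC subrr add0r -scaleN1r scalerA; exact: SZ.
pose c x := epsilon (inhabits (0:R)) (fun c => S (x - c *: n)).
have cP x : S (x - c x *: n).
  exact: (epsilon_spec (inhabits (0:R)) (fun c => S (x - c *: n)) (A x)).
have uniq : forall x c1 c2, S (x - c1 *: n) -> S (x - c2 *: n) -> rho c1 = rho c2.
  move=> x c1 c2 h1 h2; apply: rho_eq; apply: B.
  have := hSB _ _ h2 h1; congr S.
  by rewrite opprB addrC addrA subrK scalerBl.
have [phi hphi] : exists phi : {linear N -> K}, forall x, phi x = rho (c x).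
  apply: mk_linear => a x y.
  have -> : a *: rho (c x) + rho (c y) = rho (a * c x + c y).
    by rewrite -linearZ -linearD.
  apply: (uniq (a *: x + y)); first exact: cP.
  have -> : a *: x + y - (a * c x + c y) *: n = a *: (x - c x *: n) + (y - c y *: n).
    rewrite scalerDl -scalerA scalerBr opprD addrACA; done.
  by apply: SD => //; apply: SZ.
exists phi; rewrite hphi; apply: (uniq n); first exact: cP.
by rewrite scale1r subrr.
Qed.

Lemma Q0_P5 (Hd : depth_pos K N) : Q0 -> exists a, m a /\ regular_elt N a /\
              exists (Q : lmodType R) (pi : {linear N -> Q}),
                is_quotient (scal_sub a) pi /\
                exists (i : {linear K -> Q}) (p : {linear Q -> K}),
                  forall z, p (i z) = z.
Proof.
move=> /(core2 Hd) [a [n [ha [hreg [hn hr]]]]].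
exists a; split=> //; split=> //.
have hL : submod (scal_sub (N:=N) a).
  split.
  - by exists 0; rewrite scaler0.
  - by move=> x y [x' ->] [y' ->]; exists (x' + y'); rewrite scalerDr.
  - by move=> c x [x' ->]; exists (c *: x'); rewrite !scalerA mulrC.
have [L0 LD LZ] := hL.
have [Q [pi [pis pik]]] := quotient_exists L0 LD LZ.
exists Q, pi; split; first by split.
have [phi hphi] := phi_exists hn.
have [h hh] : exists h : {linear R^o -> Q}, forall r, h r = pi (r *: n).
  apply: mk_linear => b r s; change (pi ((b * r + s) *: n) = b *: pi (r *: n) + pi (s *: n)).
  by rewrite -linearP scalerDl scalerA.
have [i hi] : exists i : {linear K -> Q}, forall r, i (rho r) = h r.
  apply: factor_quot Hrho.1 _ => r /Hrho.2 hm; rewrite hh; apply/pik; exact: hr.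
have [p hp] : exists p : {linear Q -> K}, forall x, p (pi x) = phi x.
  apply: factor_quot pis _ => x /pik [z ->]; rewrite linearZ; exact: mK.
exists i, p => z; have [r <-] := Hrho.1 z.
rewrite hi hh hp linearZ hphi -linearZ; f_equal.
change (r * 1 = r); exact: mulr1.
Qed.

Lemma P5_Q0 : (exists a, m a /\ regular_elt N a /\
              exists (Q : lmodType R) (pi : {linear N -> Q}),
                is_quotient (scal_sub a) pi /\
                exists (i : {linear K -> Q}) (p : {linear Q -> K}),
                  forall z, p (i z) = z) -> Q0.
Proof.
move=> [a [ha [[areg _] [Q [pi [[pis pik] [i [p hip]]]]]]]].
have [n hn] := pis (i (rho 1)).
have hr : forall r, m r -> scal_sub a (r *: n).
  move=> r hm; apply/pik; rewrite linearZ hn -linearZ -linearZ.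
  have -> : r *: (1 : R^o) = r by change (r * 1 = r); exact: mulr1.
  have -> : rho r = 0 by exact/Hrho.2.
  by rewrite linear0.
have [g hg] := scal_lin a.
have ginj : injective g.
  move=> x y; rewrite !hg => e; apply/eqP; rewrite -subr_eq0; apply/eqP; apply: areg.
  by rewrite scalerBr e subrr.
have [f0 Hf0] : exists f0 : {linear M -> N}, forall y, f0 y = iota y *: n.
  by apply: mk_linear => b x y; rewrite linearP scalerDl scalerA.
have [f hf] : exists f : {linear M -> N}, forall x, g (f x) = f0 x.
  apply: factor_inj ginj _ => x; rewrite Hf0; have [w ->] := hr _ (iota_m x).
  by exists w; rewrite hg.
have [ya hya] := m_iota ha.
exists f, ya => hm.
have fn : f ya = n.
  apply: ginj; by rewrite hf Hf0 hya hg.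
rewrite fn in hm.
apply: rho1; rewrite -(hip (rho 1)) -hn.
have [pp hpp] : exists pp : {linear N -> K}, forall x, pp x = p (pi x).
  by apply: mk_linear => b x y; rewrite !linearP.
rewrite -hpp.
have hsub : submod (fun x : N => pp x = 0).
  split; [by rewrite linear0|by move=> x y hx hy; rewrite linearD hx hy addr0|].
  by move=> c x hx; rewrite linearZ hx; exact: scaler0.
have hgen : forall r s, m r -> (fun _ : N => True) s -> (fun x : N => pp x = 0) (r *: s).
  by move=> r s hr0 _ /=; rewrite linearZ; apply: mK.
exact: (im_sub hsub hgen hm).
Qed.

Lemma main_sec (QM : lmodType R) (piM : {linear M -> QM})
  (HpiM : is_quotient (ideal_mul m (fun _ : M => True)) piM)
  (QN : lmodType R) (piN : {linear N -> QN})
  (HpiN : is_quotient (ideal_mul m (fun _ : N => True)) piN)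
  (P : lmodType R) (j : {linear P -> N})
  (Hj : is_submod (ideal_mul m (fun _ : N => True)) j) :
  let P1 := exists (X : lmodType R), fin_gen X /\
              exists g : {linear N -> X}, injective g /\
                burch m (fun x : X => exists y, g y = x) in
  let P2 := exists (f : {linear M -> N}) (fbar : {linear QM -> QN}),
              (forall x, fbar (piM x) = piN (f x)) /\ exists z, fbar z <> 0 in
  let P3 := ~ (forall x, @trace R M N x -> ideal_mul m (fun _ : N => True) x) in
  let P4 := ~ (forall f : {linear M -> N}, exists g : {linear M -> P},
                 forall x, j (g x) = f x) in
  let P5 := exists a, m a /\ regular_elt N a /\
              exists (Q : lmodType R) (pi : {linear N -> Q}),
                is_quotient (scal_sub a) pi /\
                exists (i : {linear K -> Q}) (p : {linear Q -> K}),
                  forall z, p (i z) = z in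
  let P6 := exists a, m a /\ regular_elt N a /\ burch m (scal_sub (N:=N) a) in
  [/\ P1 <-> P2, P1 <-> P3, P1 <-> P4 &
      (depth_pos K N -> (P1 <-> P5) /\ (P1 <-> P6))].
Proof.
move=> P1 P2 P3 P4 P5 P6.
have e1 : P1 <-> Q0 by split; [exact: P1_Q0_l|exact: P1_Q0_r].
have e2 := P2_Q0 HpiM HpiN.
have e3 := P3_Q0.
have e4 := P4_Q0 Hj.
split.
- clear -e1 e2; tauto.
- clear -e1 e3; tauto.
- clear -e1 e4; tauto.
- move=> Hd; split.
  + split; first by move/e1; exact: Q0_P5.
    by move=> h; apply/e1; exact: P5_Q0.
  + split; first by move/e1; exact: Q0_P6.
    exact: P6_P1.
Qed.
End Main.

Theorem lemma3p9
  (R : comUnitRingType) (m : R -> Prop)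
  (HR : noetherian_ring R) (Hloc : local_max m)
  (N : lmodType R) (HN : fin_gen N)
  (* M, iota : a model of the ideal m as an R-module *)
  (M : lmodType R) (iota : {linear M -> R^o}) (Hiota : is_submod (M:=R^o) m iota)
  (* K, rho : a model of the residue field k = R/m *)
  (K : lmodType R) (rho : {linear R^o -> K}) (Hrho : is_quotient (M:=R^o) m rho)
  (* m (x) k = m/m^2 and N (x) k = N/mN *)
  (QM : lmodType R) (piM : {linear M -> QM})
  (HpiM : is_quotient (ideal_mul m (fun _ : M => True)) piM)
  (QN : lmodType R) (piN : {linear N -> QN})
  (HpiN : is_quotient (ideal_mul m (fun _ : N => True)) piN)
  (* P, j : a model of the submodule mN of N *)
  (P : lmodType R) (j : {linear P -> N})
  (Hj : is_submod (ideal_mul m (fun _ : N => True)) j) :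
  let P1 := exists (X : lmodType R), fin_gen X /\
              exists g : {linear N -> X}, injective g /\
                burch m (fun x : X => exists y, g y = x) in
  let P2 := exists (f : {linear M -> N}) (fbar : {linear QM -> QN}),
              (forall x, fbar (piM x) = piN (f x)) /\ exists z, fbar z <> 0 in
  let P3 := ~ (forall x, @trace R M N x -> ideal_mul m (fun _ : N => True) x) in
  let P4 := ~ (forall f : {linear M -> N}, exists g : {linear M -> P},
                 forall x, j (g x) = f x) in
  let P5 := exists a, m a /\ regular_elt N a /\
              exists (Q : lmodType R) (pi : {linear N -> Q}),
                is_quotient (scal_sub a) pi /\
                exists (i : {linear K -> Q}) (p : {linear Q -> K}),
                  forall z, p (i z) = z in
  let P6 := exists a, m a /\ regular_elt N a /\ burch m (scal_sub (N:=N) a) in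
  [/\ P1 <-> P2, P1 <-> P3, P1 <-> P4 &
      (depth_pos K N -> (P1 <-> P5) /\ (P1 <-> P6))].
Proof.
exact: (@main_sec R m HR Hloc N HN M iota Hiota K rho Hrho QM piM HpiM QN piN HpiN P j Hj).
Qed.
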